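(* For a finite graph $G$, let $M(G)$ be the maximum number of distinct subsets of $V(G)$ such that any two distinct subsets in the family are neighbors. Let $K_{m,n}$ be the complete bipartite graph with parts of sizes $m$ and $n$. Then $$M(K_{m,n})=(2^m-1)(2^n-1)+2.$$ More generally, if $K_{n_1,\dots,n_r}$ is the complete multipartite graph with disjoint parts (maximal stable sets) of cardinalities $n_1,\dots,n_r$, then $$M(K_{n_1,\dots,n_r})=2^{\sum_{i=1}^r n_i}-\sum_{i=1}^r 2^{n_i}+2r-1.$$
   Context: Two subsets $A,B$ of the vertex set of a graph $G$ are called neighbors if there exist $a\in A$ and $b\in B$ such that $a$ and $b$ are adjacent in $G$. (A subset may or may not be its own neighbor.) *)

(* Defs.v *)
From mathcomp Require Import all_boot all_order all_algebra.
Set Implicit Arguments. Unset Strict Implicit. Unset Printing Implicit Defensive.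

Section Defs.
Variable T : finType.

Definition neighbors (e : rel T) (A B : {set T}) : bool :=
  [exists a in A, exists b in B, e a b].

Definition mutually_neighboring (e : rel T) (F : {set {set T}}) : bool :=
  [forall A in F, forall B in F, (A != B) ==> neighbors e A B].

Definition M (e : rel T) : nat :=
  \max_(F : {set {set T}} | mutually_neighboring e F) #|F|.

(* complete multipartite graph whose parts are the fibres of p *)
Definition cmp_rel (I : eqType) (p : T -> I) : rel T := fun x y => p x != p y.
End Defs.

(* Main.v *)
Require Import Defs.
From mathcomp Require Import all_boot all_order all_algebra zify.
Import GRing.Theory.

Section Gen.
Variables (T I : finType) (p : T -> I) (i0 : I).
Hypothesis surj : forall i, exists x, p x = i.

Definition fib i := [set x | p x == i].
Definition Mult := [set A : {set T} | [exists x in A, exists y in A, p x != p y]].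
Definition part (A : {set T}) := if [pick x in A] is Some x then p x else i0.

Lemma nbE (A B : {set T}) : neighbors (cmp_rel p) A B = [exists a in A, exists b in B, p a != p b].
Proof. by []. Qed.

Lemma nb_sym (A B : {set T}) : neighbors (cmp_rel p) A B = neighbors (cmp_rel p) B A.
Proof.
rewrite !nbE; apply/existsP/existsP => -[a /andP[aA /existsP[b /andP[bB ab]]]];
  exists b; rewrite bB /=; apply/existsP; exists a; by rewrite aA eq_sym.
Qed.

Lemma singleP (A : {set T}) : reflect (forall x y, x \in A -> y \in A -> p x = p y) (A \notin Mult).
Proof.
rewrite inE; apply: (iffP idP) => [H x y xA yA|H].
  by apply/eqP; apply: contraNT H => pxy; apply/existsP; exists x; rewrite xA; apply/existsP; exists y; rewrite yA.
apply/existsP => -[x /andP[xA /existsP[y /andP[yA /eqP[]]]]]; exact: H.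
Qed.

Lemma part_single (A : {set T}) x : A \notin Mult -> x \in A -> part A = p x.
Proof.
move=> /singleP sA xA; rewrite /part; case: pickP => [y yA|/(_ x)]; last by rewrite xA.
exact: sA.
Qed.

Lemma Mult_nb (A B : {set T}) : A \in Mult -> B != set0 -> neighbors (cmp_rel p) A B.
Proof.
rewrite inE => /existsP[x /andP[xA /existsP[y /andP[yA pxy]]]] /set0Pn[b bB].
rewrite nbE; case: (eqVneq (p x) (p b)) => pxb.
  apply/existsP; exists y; rewrite yA; apply/existsP; exists b; rewrite bB.
  by rewrite -pxb eq_sym.
apply/existsP; exists x; rewrite xA; apply/existsP; exists b; by rewrite bB.
Qed.

Lemma fib_notMult i : fib i \notin Mult.
Proof. by apply/singleP => x y; rewrite !inE => /eqP-> /eqP->. Qed.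

Lemma fib_n0 i : fib i != set0.
Proof. by have [x px] := surj i; apply/set0Pn; exists x; rewrite inE px. Qed.

Lemma fib_inj : injective fib.
Proof.
move=> i j eij; have [x px] := surj i.
have : x \in fib i by rewrite inE px.
by rewrite eij inE px => /eqP.
Qed.

Lemma Mult_n0 (A : {set T}) : A \in Mult -> A != set0.
Proof. by rewrite inE => /existsP[x /andP[xA _]]; apply/set0Pn; exists x. Qed.

Definition F0 := Mult :|: (fib @: setT).

Lemma F0_mn : mutually_neighboring (cmp_rel p) F0.
Proof.
apply/forall_inP => A AF; apply/forall_inP => B BF; apply/implyP => AB.
have n0 C : C \in F0 -> C != set0.
  rewrite inE => /orP[/Mult_n0 //|/imsetP[i _ ->]]; exact: fib_n0.
case AM: (A \in Mult); first by apply: Mult_nb => //; exact: n0.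
case BM: (B \in Mult); first by rewrite nb_sym; apply: Mult_nb => //; exact: n0.
move: AF BF; rewrite !in_setU AM BM /= => /imsetP[i _ eA] /imsetP[j _ eB].
have [x px] := surj i; have [y py] := surj j.
rewrite nbE; apply/existsP; exists x; rewrite eA inE px eqxx /=.
apply/existsP; exists y; rewrite eB inE py eqxx /=.
by apply: contraNneq AB => eij; rewrite eA eB eij.
Qed.

Lemma card_F0 : #|F0| = #|Mult| + #|I|.
Proof.
rewrite /F0 cardsU card_imset; last exact: fib_inj.
rewrite cardsT.
suff -> : Mult :&: (fib @: setT) = set0 by rewrite cards0 subn0.
apply/setP => A; rewrite in_setI in_set0; apply/negbTE; apply/andP => -[AM /imsetP[i _ eA]].
by move: (fib_notMult i); rewrite -eA AM.
Qed.

Lemma upper F : mutually_neighboring (cmp_rel p) F -> #|F| <= #|Mult| + #|I|.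
Proof.
move=> mn.
have I0 : 0 < #|I| by apply/card_gt0P; exists i0.
have nbF A B : A \in F -> B \in F -> A != B -> neighbors (cmp_rel p) A B.
  by move=> AF BF AB; move/forall_inP/(_ A AF)/forall_inP/(_ B BF)/implyP: mn; apply.
case F0: (set0 \in F).
  have : F \subset [set set0].
    apply/subsetP => B BF; rewrite inE; apply/negPn/negP => B0.
    have := nbF _ _ F0 BF; rewrite eq_sym => /(_ B0).
    by rewrite nbE => /existsP[a /andP[]]; rewrite inE.
  move/subset_leq_card; rewrite cards1 => h; apply: leq_trans h _.
  by apply: leq_trans I0 (leq_addl _ _).
rewrite -(cardsID Mult F) leq_add //; first by apply: subset_leq_card; exact: subsetIr.
rewrite -(card_in_imset (f := part)); first exact: max_card.
move=> A B; rewrite !in_setD => /andP[AM AF] /andP[BM BF] pAB.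
apply/eqP; apply/negP => /negP AB.
have := nbF _ _ AF BF AB; rewrite nbE => /existsP[a /andP[aA /existsP[b /andP[bB]]]].
by rewrite -(@part_single A a AM aA) -(@part_single B b BM bB) pAB eqxx.
Qed.

Lemma M_gen : M (cmp_rel p) = #|Mult| + #|I|.
Proof.
apply/eqP; rewrite eqn_leq; apply/andP; split.
  by apply/bigmax_leqP => F; apply: upper.
rewrite -card_F0; apply: (leq_bigmax_cond (F := fun F : {set {set T}} => #|F|)); exact: F0_mn.
Qed.
Lemma card_T_fib : #|T| = \sum_i #|fib i|.
Proof.
rewrite -sum1_card (partition_big p predT) //=; apply: eq_bigr => i _.
rewrite -sum1_card; apply: eq_bigl => x; by rewrite inE.
Qed.

Lemma cardP_fib i : #|powerset (fib i) :\ set0| + 1 = 2 ^ #|fib i|.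
Proof. by rewrite -card_powerset (cardsD1 set0 (powerset (fib i))) inE sub0set addnC. Qed.

Lemma nonMult_part A i : (A \in ~: Mult :\ set0) && (part A == i) = (A \in powerset (fib i) :\ set0).
Proof.
rewrite in_setD1 in_setC in_setD1 powersetE -andbA.
case: (eqVneq A set0) => [//|An0] /=.
have [x xA] := set0Pn _ An0.
apply/idP/idP.
  move=> /andP[AM pA]; apply/subsetP => y yA; rewrite inE -(@part_single A y AM yA); exact: pA.
move=> /subsetP Af.
have AM : A \notin Mult.
  by apply/singleP => y z /Af; rewrite inE => /eqP-> /Af; rewrite inE => /eqP->.
rewrite AM /= (@part_single A x AM xA).
by have := Af x xA; rewrite inE.
Qed.

Lemma counting : #|Mult| + \sum_i 2 ^ #|fib i| + 1 = 2 ^ #|T| + #|I|.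
Proof.
have hT : #|{set T}| = 2 ^ #|T|.
  by have := card_powerset [set: T]; rewrite powersetT !cardsT.
rewrite -hT -(cardsC Mult) (cardsD1 set0 (~: Mult)).
have -> : set0 \in ~: Mult.
  by rewrite in_setC; apply/singleP => x y; rewrite inE.
have -> : #|~: Mult :\ set0| = \sum_i #|powerset (fib i) :\ set0|.
  rewrite -sum1_card (partition_big part predT) //=; apply: eq_bigr => i _.
  rewrite -sum1_card; apply: eq_bigl => A; exact: nonMult_part.
rewrite (eq_bigr (fun i => #|powerset (fib i) :\ set0| + 1)); last by move=> i _; rewrite cardP_fib.
rewrite big_split /= sum1_card /= -[#|xpredT|]/#|I|; lia.
Qed.
End Gen.


Theorem proposition1 :
  (forall (T : finType) (p : T -> bool) (m n : nat),
      0 < m -> 0 < n ->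
      #|[set x | p x]| = m -> #|[set x | ~~ p x]| = n ->
      M (cmp_rel p) = (2 ^ m - 1) * (2 ^ n - 1) + 2)
  /\
  (forall (r : nat) (T : finType) (n : 'I_r -> nat) (p : T -> 'I_r),
      0 < r -> (forall i, 0 < n i) ->
      (forall i, #|[set x | p x == i]| = n i) ->
      ((M (cmp_rel p))%:Z =
         (2 ^ (\sum_(i < r) n i))%:Z - (\sum_(i < r) 2 ^ n i)%:Z
         + (2 * r)%:Z - 1)%R).
Proof.
split.
  move=> T p m n m0 n0 hm hn.
  have ft : #|fib _ _ p true| = m by rewrite -hm; apply: eq_card => x; rewrite !inE eqb_id.
  have ff : #|fib _ _ p false| = n by rewrite -hn; apply: eq_card => x; rewrite !inE eqbF_neg.
  have surj : forall i, exists x, p x = i.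
    case.
      by move: m0; rewrite -ft => /card_gt0P[x]; rewrite inE => /eqP; exists x.
    by move: n0; rewrite -ff => /card_gt0P[x]; rewrite inE => /eqP; exists x.
  rewrite (M_gen _ _ p true surj).
  have := counting _ _ p true; rewrite (card_T_fib _ _ p) !big_bool /= ft ff card_bool expnD.
  have a1 : 0 < 2 ^ m by rewrite expn_gt0.
  have b1 : 0 < 2 ^ n by rewrite expn_gt0.
  move: (2 ^ m) (2 ^ n) a1 b1 => a b a1 b1; nia.
move=> r T n p r0 n0 hn.
have surj : forall i, exists x, p x = i.
  by move=> i; move: (n0 i); rewrite -hn => /card_gt0P[x]; rewrite inE => /eqP; exists x.
rewrite (M_gen _ _ p (Ordinal r0) surj).
have := counting _ _ p (Ordinal r0); rewrite (card_T_fib _ _ p) card_ord.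
have -> : \sum_i #|fib _ _ p i| = \sum_i n i by apply: eq_bigr => i _; rewrite hn.
have -> : \sum_i 2 ^ #|fib _ _ p i| = \sum_i 2 ^ n i by apply: eq_bigr => i _; rewrite hn.
move: (2 ^ _) (\sum_i 2 ^ n i) => a b. lia.
Qed.
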